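(* Let $K$ be a field, $c\in K\setminus\{0\}$ and $n\ge1$. There is a bijection between the set $\Psi_c^n$ of $c$-polygonal sequences of order $n$ and the set $\Psi_{-c}^n$ of $(-c)$-polygonal sequences of order $n$.
   Context: For a nonzero $a\in K$, the $a$-continuant polynomials $P_k^a$ ($k\ge-1$) are defined by $P_{-1}^a=0$, $P_0^a=1$, and for $k\ge1$, $P_k^a(x_1,\dots,x_k)=x_kP_{k-1}^a(x_1,\dots,x_{k-1})+aP_{k-2}^a(x_1,\dots,x_{k-2})$. A family $(x_i)_{i\in\mathbb{Z}}$ in $K$ is $n$-admissible (for $a$) if $P_{n+2}^a(x_i,\dots,x_{i+n+1})=0$ for all $i$. Let $\mathbb{B}_n=\{(i,j)\in\mathbb{Z}^2:-2\le j-i\le n+1\}$. An $a$-frieze of order $n$ is a function $f:\mathbb{B}_n\to K$ for which there is an $n$-admissible family $(x_i)$ (for $a$) with $f(i,j)=P^a_{j-i+1}(x_i,\dots,x_j)$ for all $(i,j)\in\mathbb{B}_n$. An $a$-polygonal sequence of order $n$ is a tuple $(f(m+1,m+1),f(m+2,m+2),\dots,f(m+n+3,m+n+3))\in K^{n+3}$ of $n+3$ consecutive first-row entries of some $a$-frieze $f$ of order $n$ (for some $m\in\mathbb{Z}$); $\Psi_a^n$ denotes the set of all of them. *)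

(* Defs.v *)
From HB Require Import structures.
From mathcomp Require Import all_boot all_order all_algebra.
Set Implicit Arguments. Unset Strict Implicit. Unset Printing Implicit Defensive.
Import Order.TTheory GRing.Theory Num.Theory.
Local Open Scope ring_scope.

(* a-continuant P_k^a(x_1,...,x_k), with the variables given 0-indexed:
   x_j is (x (j-1)).  Pk a x 0 = P_0 = 1, Pk a x 1 = x_1 P_0 + a P_{-1} = x_1,
   Pk a x (k+2) = x_{k+2} P_{k+1} + a P_k. *)
Fixpoint Pk (K : fieldType) (a : K) (x : nat -> K) (k : nat) {struct k} : K :=
  match k with
  | 0%N => 1
  | k'.+1 =>
      match k' with
      | 0%N => x 0%N
      | k''.+1 => x k' * Pk a x k' + a * Pk a x k''
      end
  end.

(* P^a_m(x_i, ..., x_{i+m-1}) for an integer length m >= -1, with P_{-1} = 0. *)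
Definition contZ (K : fieldType) (a : K) (x : int -> K) (i : int) (m : int) : K :=
  match m with
  | Posz k => Pk a (fun t : nat => x (i + t%:Z)) k
  | Negz _ => 0
  end.

Definition admissible (K : fieldType) (a : K) (n : nat) (x : int -> K) : Prop :=
  forall i : int, Pk a (fun t : nat => x (i + t%:Z)) n.+2 = 0.

(* B_n = {(i,j) : -2 <= j - i <= n+1}; an a-frieze of order n is a function on
   B_n (modelled as f : int -> int -> K, values outside B_n irrelevant). *)
Definition inBn (n : nat) (i j : int) : bool := (-2 <= j - i) && (j - i <= n.+1%:Z).

Definition is_frieze (K : fieldType) (a : K) (n : nat) (f : int -> int -> K) : Prop :=
  exists x : int -> K, admissible a n x /\
    forall i j : int, inBn n i j -> f i j = contZ a x i (j - i + 1).

Definition polygonal (K : fieldType) (a : K) (n : nat) (t : (n.+3).-tuple K) : Prop :=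
  exists (f : int -> int -> K) (m : int), is_frieze a n f /\
    forall k : 'I_(n.+3), tnth t k = f (m + k%:Z + 1) (m + k%:Z + 1).

(* Main.v *)
Require Import Defs.
From mathcomp Require Import all_boot all_order all_algebra.
From mathcomp Require Import ring.
From Stdlib Require Import ProofIrrelevance.
Import Order.TTheory GRing.Theory Num.Theory.
Local Open Scope ring_scope.

Definition sig (K : fieldType) (k : nat) : K := (-1) ^+ (k.+1./2).

Lemma sig2 (K : fieldType) k : sig K k.+2 = - sig K k.
Proof. by rewrite /sig /= exprS mulN1r. Qed.

Lemma sig1 (K : fieldType) k : sig K k.+1 = - (-1) ^+ k * sig K k.
Proof.
elim: k => [|k IH]; first by rewrite /sig /= expr0 expr1 mulr1.
rewrite sig2 IH.
have hu : (-1)^+k * (-1)^+k = 1 :> K by rewrite -exprMn mulN1r opprK expr1n.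
rewrite exprS mulN1r opprK mulNr mulrN mulrA hu mul1r.
done.
Qed.


Lemma key (K : fieldType) (a e : K) (x y : nat -> K) :
  e * e = 1 -> (forall t, y t = e * (-1) ^+ t.+1 * x t) ->
  forall k, Pk (- a) y k = e ^+ k * sig K k * Pk a x k.
Proof.
move=> he hy.
suff H : forall k, Pk (- a) y k = e ^+ k * sig K k * Pk a x k /\
                    Pk (- a) y k.+1 = e ^+ k.+1 * sig K k.+1 * Pk a x k.+1 by move=> k; case: (H k).
elim=> [|k [IH1 IH2]].
  by rewrite /= hy /sig /= !expr0 !mulr1 expr1.
split=> //.
have -> : Pk (- a) y k.+2 = y k.+1 * Pk (- a) y k.+1 + (- a) * Pk (- a) y k by [].
have -> : Pk a x k.+2 = x k.+1 * Pk a x k.+1 + a * Pk a x k by [].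
rewrite IH1 IH2 hy sig2 sig1.
have e2 : e ^+ k.+2 = e ^+ k by rewrite !exprS mulrA he mul1r.
have hu : (-1)^+k * (-1)^+k = 1 :> K by rewrite -exprMn mulN1r opprK expr1n.
rewrite e2 !exprS.
set u := (-1) ^+ k. set E := e ^+ k. set s := sig K k.
set P1 := Pk a x k.+1. set P0 := Pk a x k.
transitivity (- (e * e) * (u * u) * E * s * x k.+1 * P1 - a * E * s * P0); first ring.
rewrite he hu; ring.
Qed.

Definition alt (K : fieldType) (n : nat) (t : (n.+3).-tuple K) : (n.+3).-tuple K :=
  [tuple (-1) ^+ (val k) * tnth t k | k < n.+3].

Arguments alt {K n}.

Lemma alt_inv (K : fieldType) n (t : (n.+3).-tuple K) : alt (alt t) = t.
Proof.
apply: eq_from_tnth => k; rewrite !tnth_mktuple mulrA -exprMn mulN1r opprK expr1n mul1r //.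
Qed.

Lemma poly_alt (K : fieldType) (a : K) n (t : (n.+3).-tuple K) : polygonal a t -> polygonal (- a) (alt t).
Proof.
case=> f [m [[x [adm hf]] ht]].
pose y := fun j : int => (-1) ^ (j - m - 1) * x j.
exists (fun i j => contZ (-a) y i (j - i + 1)), m; split.
- exists y; split=> // i.
  set e := - (-1) ^ (i - m - 1) : K.
  have he : e * e = 1 by rewrite mulrNN -expfzMl mulN1r opprK exp1rz.
  rewrite (@key K a e (fun t : nat => x (i + t%:Z))) //; first by rewrite adm mulr0.
  move=> s; rewrite /y.
  have -> : i + s%:Z - m - 1 = (i - m - 1) + s%:Z by ring.
  rewrite expfzDr ?oppr_eq0 ?oner_eq0 // /e exprS; simpl.
  by rewrite mulN1r mulrNN.
move=> k; rewrite tnth_mktuple ht hf; last by rewrite /inBn subrr.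
rewrite subrr add0r /contZ /= /y addr0.
have -> : m + k%:Z + 1 - m - 1 = k%:Z by ring.
by [].
Qed.

Theorem mainTheorem14 (K : fieldType) (c : K) (n : nat) (hc : c != 0) (hn : (1 <= n)%N) :
  exists g : {t : (n.+3).-tuple K | polygonal c t} ->
             {t : (n.+3).-tuple K | polygonal (- c) t},
    bijective g.
Proof.
have hinv : forall t : (n.+3).-tuple K, polygonal (- c) t -> polygonal c (alt t).
  by move=> t /poly_alt; rewrite opprK.
exists (fun u : {t : (n.+3).-tuple K | polygonal c t} => exist _ (alt (sval u)) (@poly_alt K c n (sval u) (proj2_sig u))).
exists (fun u : {t : (n.+3).-tuple K | polygonal (- c) t} => exist _ (alt (sval u)) (hinv _ (proj2_sig u))).
- by case=> t pt /=; apply: eq_sig_hprop => [p|/=]; [exact: proof_irrelevance | rewrite alt_inv].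
- by case=> t pt /=; apply: eq_sig_hprop => [p|/=]; [exact: proof_irrelevance | rewrite alt_inv].
Qed.
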